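(* Assume $R\neq0$. Then: (1) every $\nu_{(w,e)}$ with $w=\sum_n r_nx^n\in W_1$ satisfying $\sum_n r_n=1$ is a right unit of $T_e$; in particular $T_e$ has more than one right unit; (2) every minimal prime ideal $I\neq T_e$ of $End_1$ has at most one right unit. Consequently, $T_e$ is the unique minimal prime ideal of $End_1$ having more than one right unit.
   Context: $R$ is a commutative associative ring with unit. A group representation $(A,G,\cdot)$ is an $R$-module $A$ with a right action of the group $G$ by $R$-module automorphisms; homomorphisms are pairs $(\mu^{(1)},\mu^{(2)})$ ($R$-linear map, group homomorphism) with $\mu^{(1)}(a\cdot g)=\mu^{(1)}(a)\bullet\mu^{(2)}(g)$. $F_1=\langle x\rangle$ is infinite cyclic with identity $e$, and $W_1=RF_1$ is the group algebra on which $F_1$ acts by right multiplication. $End_1$ is the monoid of endomorphisms of $(W_1,F_1)$. $\nu_{(w,g)}$ denotes the endomorphism with $1\mapsto w$ and $x\mapsto g$, and $T_e=\{\nu_{(w,e)}:w\in W_1\}$. Ideals of a monoid $M$ are subsets $I$ with $MI\cup IM\subseteq I$; $I$ is prime if $ab\in I$ implies $a\in I$ or $b\in I$. A right unit of $I$ is $u\in I$ with $\nu\circ u=\nu$ for all $\nu\in I$. *)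

(* Defs.v *)
From HB Require Import structures.
From mathcomp Require Import all_boot all_algebra.
From mathcomp Require Import finmap.
From mathcomp.multinomials Require Import monalg.

Set Implicit Arguments.
Unset Strict Implicit.
Unset Printing Implicit Defensive.

Import GRing.Theory.
Local Open Scope ring_scope.

(* F_1 = <x> infinite cyclic is modelled additively by int: x^k <-> k,
   the identity e is 0 and the generator x is 1.
   W_1 = R F_1 is the group algebra, i.e. finitely supported functions
   int -> R (monalg's {malg R[int]}), an R-module (lmodType R). *)
Definition W1 (R : comNzRingType) := {malg R[int]}.

Definition xpow (R : comNzRingType) (k : int) : W1 R := mkmalgU k (1 : R).

Definition W1one (R : comNzRingType) : W1 R := xpow R 0.

Definition act (R : comNzRingType) (a : W1 R) (k : int) : W1 R :=
  \sum_(n <- msupp a) mkmalgU (n + k) (a@_n).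

Definition W1coef_sum (R : comNzRingType) (w : W1 R) : R :=
  \sum_(n <- msupp w) w@_n.

Definition Endo (R : comNzRingType) := ((W1 R -> W1 R) * (int -> int))%type.

Definition is_end (R : comNzRingType) (m : Endo R) : Prop :=
  [/\ (forall (r : R) (a b : W1 R), m.1 (r *: a + b) = r *: m.1 a + m.1 b),
      (forall g h : int, m.2 (g + h) = m.2 g + m.2 h)
    & (forall (a : W1 R) (g : int), m.1 (act a g) = act (m.1 a) (m.2 g))].

Definition ecomp (R : comNzRingType) (m n : Endo R) : Endo R :=
  (m.1 \o n.1, m.2 \o n.2).

(* subsets of End_1 are predicates on Endo R contained in is_end *)
Definition eset (R : comNzRingType) := Endo R -> Prop.

(* T_e = { nu_(w,e) : w in W_1 }: endomorphisms sending x to e *)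
Definition Te (R : comNzRingType) : eset R :=
  fun m => is_end m /\ m.2 1 = 0.

Definition is_ideal (R : comNzRingType) (I : eset R) : Prop :=
  [/\ exists m, I m,
      (forall m, I m -> is_end m)
    & (forall a m, is_end a -> I m -> I (ecomp a m) /\ I (ecomp m a))].

Definition is_prime (R : comNzRingType) (I : eset R) : Prop :=
  forall a b, is_end a -> is_end b -> I (ecomp a b) -> I a \/ I b.

Definition is_prime_ideal (R : comNzRingType) (I : eset R) : Prop :=
  is_ideal I /\ is_prime I.

Definition is_minimal_prime_ideal (R : comNzRingType) (I : eset R) : Prop :=
  is_prime_ideal I /\
  forall J : eset R, is_prime_ideal J -> (forall m, J m -> I m) ->
    forall m, I m -> J m.

Definition right_unit (R : comNzRingType) (I : eset R) (u : Endo R) : Prop :=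
  I u /\ forall v, I v -> ecomp v u = v.

Definition many_right_units (R : comNzRingType) (I : eset R) : Prop :=
  exists u1 u2, [/\ right_unit I u1, right_unit I u2 & u1 <> u2].

Definition le1_right_unit (R : comNzRingType) (I : eset R) : Prop :=
  forall u1 u2, right_unit I u1 -> right_unit I u2 -> u1 = u2.

Definition eset_eq (R : comNzRingType) (I J : eset R) : Prop :=
  forall m, I m <-> J m.

(* Main.v *)
Require Import Defs.
From HB Require Import structures.
From mathcomp Require Import all_boot all_algebra.
From mathcomp Require Import finmap.
From mathcomp.multinomials Require Import monalg.
Local Open Scope ring_scope.
Import GRing.Theory.
From Stdlib Require Import FunctionalExtensionality Classical.

Section S.
Variable R : comNzRingType.
Implicit Types a b w : W1 R.

Lemma epsEw a (d0 : {fset int}) : (msupp a `<=` d0)%fset -> W1coef_sum a = \sum_(k <- d0) a@_k.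
Proof.
by move=> le; rewrite /W1coef_sum [LHS](big_fset_incl _ le) => //= x xd /mcoeff_outdom ->.
Qed.

Lemma epsD a b : W1coef_sum (a + b) = W1coef_sum a + W1coef_sum b.
Proof.
rewrite (epsEw _ _ (msuppD_le a b)).
rewrite (epsEw _ _ (fsubsetUl (msupp a) (msupp b))).
rewrite (epsEw _ _ (fsubsetUr (msupp a) (msupp b))).
by rewrite -big_split /=; apply: eq_bigr => k _; rewrite mcoeffD.
Qed.

Lemma epsZ r a : W1coef_sum (r *: a) = r * W1coef_sum a.
Proof.
rewrite (epsEw _ _ (msuppZ_le r a)) /W1coef_sum big_distrr /=.
by apply: eq_bigr => k _; rewrite mcoeffZ.
Qed.

Lemma epsU k (c : R) : W1coef_sum (mkmalgU k c : W1 R) = c.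
Proof. by rewrite (epsEw _ _ msuppU_le) big_seq_fset1 mcoeffUU. Qed.

Lemma act_coef a g k : (act a g)@_k = a@_(k - g).
Proof.
rewrite /act raddf_sum /=.
under eq_bigr do rewrite mcoeffU.
have [kin|kout] := boolP (k - g \in msupp a).
  rewrite (big_fsetD1 (k - g)) //= subrK eqxx mulr1n big1_fset ?addr0 // => n.
  rewrite in_fsetD1 => /andP[ne _] _; case: eqP => // e.
  by move: ne; rewrite -e addrK eqxx.
rewrite big1_fset ?(mcoeff_outdom kout) // => n nin _; case: eqP => // e.
by move: kout; rewrite -e addrK nin.
Qed.

Lemma act0 a : act a 0 = a.
Proof. by apply/malgP => k; rewrite act_coef subr0. Qed.

Lemma actZ r a g : act (r *: a) g = r *: act a g.
Proof. by apply/malgP => k; rewrite act_coef !mcoeffZ act_coef. Qed.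

Lemma eps0 : W1coef_sum (0 : W1 R) = 0.
Proof. by rewrite /W1coef_sum msupp0 big_nil. Qed.

Lemma eps_sum (I : Type) (s : seq I) (F : I -> W1 R) :
  W1coef_sum (\sum_(i <- s) F i) = \sum_(i <- s) W1coef_sum (F i).
Proof. exact: (big_morph _ epsD eps0). Qed.

Lemma eps_act a g : W1coef_sum (act a g) = W1coef_sum a.
Proof.
rewrite /act eps_sum; apply: eq_bigr => n _; exact: epsU.
Qed.

Lemma add_int (f : int -> int) : (forall g h, f (g + h) = f g + f h) ->
  forall n, f n = n * f 1.
Proof.
move=> Hf.
have f0 : f 0 = 0.
  have h := Hf 0 0; rewrite addr0 in h.
  by apply: (addrI (f 0)); rewrite addr0 -h.
have Hp : forall k : nat, f k = k%:Z * f 1.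
  elim=> [|k IH]; first by rewrite f0 mul0r.
  by rewrite intS Hf IH mulrDl mul1r.
have fN : forall x, f (- x) = - f x.
  by move=> x; apply/eqP; rewrite -addr_eq0 -Hf addNr f0.
case=> k; first exact: Hp.
by rewrite NegzE fN Hp mulNr.
Qed.

Section E.
Variable m : Endo R.
Hypothesis Hm : is_end m.

Lemma e0 : m.1 0 = 0.
Proof.
case: Hm => H _ _; have h := H 1 0 0; rewrite !scale1r addr0 in h.
by apply: (addrI (m.1 0)); rewrite addr0 -h.
Qed.

Lemma eD a b : m.1 (a + b) = m.1 a + m.1 b.
Proof. by case: Hm => H _ _; have := H 1 a b; rewrite !scale1r. Qed.

Lemma eZ r a : m.1 (r *: a) = r *: m.1 a.
Proof. by case: Hm => H _ _; rewrite -[r *: a]addr0 H e0 addr0. Qed.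

Lemma e_sum (I : Type) (s : seq I) (F : I -> W1 R) :
  m.1 (\sum_(i <- s) F i) = \sum_(i <- s) m.1 (F i).
Proof. exact: (big_morph _ eD e0). Qed.

Lemma e2 n : m.2 n = n * m.2 1.
Proof. by case: Hm => _ H _; apply: add_int. Qed.

Lemma e2_0 : m.2 0 = 0.
Proof. by rewrite e2 mul0r. Qed.

Lemma eG y : m.1 y = \sum_(k <- msupp y) y@_k *: act (m.1 (W1one R)) (m.2 k).
Proof.
rewrite {1}[y]monalgE e_sum; apply: eq_bigr => k _.
case: Hm => _ _ H; rewrite -H -eZ; congr (m.1 _).
apply/malgP => j; rewrite mcoeffZ act_coef /W1one /xpow !mcoeffU.
by rewrite mulr_natr [0 == _]eq_sym subr_eq0 eq_sym.
Qed.

Lemma eK : m.2 1 = 0 -> forall y, m.1 y = W1coef_sum y *: m.1 (W1one R).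
Proof.
move=> h y; rewrite eG /W1coef_sum scaler_suml; apply: eq_bigr => k _.
by rewrite e2 h mulr0 act0.
Qed.

End E.

Lemma ecomp_end (a b : Endo R) : is_end a -> is_end b -> is_end (ecomp a b).
Proof.
move=> Ha Hb; case: (Ha) => A1 A2 A3; case: (Hb) => B1 B2 B3; split => /=.
- by move=> r x y; rewrite B1 A1.
- by move=> g h; rewrite B2 A2.
- by move=> x g; rewrite B3 A3.
Qed.

Lemma end_uniq (a b : Endo R) : is_end a -> is_end b ->
  a.1 (W1one R) = b.1 (W1one R) -> a.2 1 = b.2 1 -> a = b.
Proof.
move=> Ha Hb h1 h2.
have E2 : a.2 = b.2 by apply: functional_extensionality => n; rewrite (e2 _ Ha) (e2 _ Hb) h2.
have E1 : a.1 = b.1.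
  by apply: functional_extensionality => y; rewrite (eG _ Ha) (eG _ Hb) h1 E2.
by case: a b E1 E2 {Ha Hb h1 h2} => [? ?] [? ?] /= -> ->.
Qed.

Lemma conv w1 w2 : \sum_(k <- msupp w2) w2@_k *: act w1 k =
  \sum_(k <- msupp w1) w1@_k *: act w2 k.
Proof.
rewrite /act; under eq_bigr do rewrite scaler_sumr.
under [RHS]eq_bigr do rewrite scaler_sumr.
rewrite exchange_big /=; apply: eq_bigr => n _; apply: eq_bigr => k _.
apply/malgP => j; rewrite !mcoeffZ !mcoeffU addrC.
by rewrite !mulrnAr mulrC.
Qed.

Definition zE : Endo R := (fun _ => 0, fun _ => 0).
Definition oE : Endo R := (fun _ => 0, fun n => n).
Definition sE (e : R) : Endo R := (fun a => e *: a, fun n => n).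
Definition uE (w : W1 R) : Endo R := (fun a => W1coef_sum a *: w, fun _ => 0).

Lemma act_0 g : act (0 : W1 R) g = 0.
Proof. by apply/malgP => k; rewrite act_coef !mcoeff0. Qed.

Lemma zE_end : is_end zE.
Proof. by split => /= [r a b|g h|a g]; rewrite ?act_0 ?scaler0 ?addr0. Qed.

Lemma oE_end : is_end oE.
Proof. by split => /= [r a b|g h|a g]; rewrite ?act_0 ?scaler0 ?addr0. Qed.

Lemma sE_end e : is_end (sE e).
Proof.
split => /= [r a b|g h|a g]; rewrite ?actZ //.
by rewrite scalerDr !scalerA mulrC.
Qed.

Lemma uE_end w : is_end (uE w).
Proof.
split => /= [r a b|g h|a g]; rewrite ?eps_act ?act0 ?addr0 //.
by rewrite epsD epsZ scalerDl scalerA.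
Qed.

Lemma P1 (w : W1 R) (m : Endo R) :
  W1coef_sum w = 1 -> is_end m -> m.1 (W1one R) = w -> m.2 1 = 0 ->
  right_unit (@Te R) m.
Proof.
move=> ew Hm mw m0; split; first by split.
move=> v [Hv v0]; apply: end_uniq => //; first exact: ecomp_end.
- by rewrite /= mw (eK _ Hv v0) ew scale1r.
- by rewrite /= m0 (e2_0 _ Hv) v0.
Qed.

Lemma epsW1one : W1coef_sum (W1one R) = 1.
Proof. exact: epsU. Qed.

Lemma many_Te : many_right_units (@Te R).
Proof.
exists (uE (W1one R)), (uE (xpow R 1)); split.
- apply: (P1 (W1one R)) => //; [exact: epsU | exact: uE_end |].
  by rewrite /= epsW1one scale1r.
- apply: (P1 (xpow R 1)) => //; [exact: epsU | exact: uE_end |].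
  by rewrite /= epsW1one scale1r.
- move=> /(congr1 (fun u : Endo R => (u.1 (W1one R))@_0)) /=.
  rewrite epsW1one !scale1r /W1one /xpow !mcoeffU /= => /eqP.
  by rewrite oner_eq0.
Qed.

Lemma P2 (I : eset R) : is_prime_ideal I -> ~ eset_eq I (@Te R) -> le1_right_unit I.
Proof.
move=> [[_ Iend Iid] Ipr] neq u1 u2 [I1 R1] [I2 R2].
have E1 := Iend _ I1; have E2 := Iend _ I2.
have c12 : u1.2 1 * u2.2 1 = u2.2 1.
  by have := congr1 (fun u : Endo R => u.2 1) (R1 _ I2); rewrite /= (e2 _ E2).
have c21 : u2.2 1 * u1.2 1 = u1.2 1.
  by have := congr1 (fun u : Endo R => u.2 1) (R2 _ I1); rewrite /= (e2 _ E1).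
have c11 : u1.2 1 * u1.2 1 = u1.2 1.
  by have := congr1 (fun u : Endo R => u.2 1) (R1 _ I1); rewrite /= (e2 _ E1).
have ceq : u1.2 1 = u2.2 1 by rewrite -c12 mulrC c21.
have : u1.2 1 * (u1.2 1 - 1) == 0 by rewrite mulrBr mulr1 c11 subrr.
rewrite mulf_eq0 subr_eq0 => /orP[/eqP c0|/eqP c1].
  exfalso; apply: neq => m; split.
    move=> Im; split; first exact: Iend.
    have := congr1 (fun u : Endo R => u.2 1) (R1 _ Im).
    by rewrite /= c0 (e2_0 _ (Iend _ Im)) => <-.
  move=> [Hm m0].
  pose e := W1coef_sum (u1.1 (W1one R)).
  have eq : ecomp m (sE e) = ecomp m u1.
    apply: end_uniq; [exact: ecomp_end (sE_end _)|exact: ecomp_end|..] => /=.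
      by rewrite (eZ _ Hm) (eK _ Hm m0 (u1.1 _)).
    by rewrite c0 (e2_0 _ Hm).
  have : I (ecomp m (sE e)) by rewrite eq; case: (Iid _ _ Hm I1).
  case/(Ipr _ _ Hm (sE_end e)) => // Is.
  have := congr1 (fun u : Endo R => u.2 1) (R1 _ Is).
  by rewrite /= c0 => /eqP; rewrite eq_sym oner_eq0.
apply: end_uniq => //.
have -> : u1.1 (W1one R) = (ecomp u1 u2).1 (W1one R) by rewrite (R2 _ I1).
have -> : u2.1 (W1one R) = (ecomp u2 u1).1 (W1one R) by rewrite (R1 _ I2).
rewrite /= (eG _ E1 (u2.1 _)) (eG _ E2 (u1.1 _)).
under eq_bigr do rewrite (e2 _ E1) c1 mulr1.
under [RHS]eq_bigr do rewrite (e2 _ E2) -ceq c1 mulr1.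
exact: conv.
Qed.

Lemma Te_min : is_minimal_prime_ideal (@Te R).
Proof.
have Tprime : is_prime_ideal (@Te R).
  split.
    split; first by exists zE; split; [exact: zE_end|].
      by move=> m [].
    move=> a m Ha [Hm m0]; split; split; try exact: ecomp_end.
      by rewrite /= m0 (e2_0 _ Ha).
    by rewrite /= (e2 _ Hm) m0 mulr0.
  move=> a b Ha Hb [_ /=]; rewrite (e2 _ Ha) => /eqP; rewrite mulf_eq0.
  by case/orP => /eqP h; [right|left].
split => // J [[[m0 Jm0] Jend Jid] Jpr] JT m [Hm mm].
have Jz : J zE.
  have : J (ecomp zE m0) by case: (Jid _ _ zE_end Jm0).
  have -> // : ecomp zE m0 = zE.
  by apply: end_uniq => //; [exact: ecomp_end zE_end (Jend _ Jm0)|exact: zE_end].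
have eq : ecomp m oE = zE.
  apply: end_uniq => //; [exact: ecomp_end oE_end|exact: zE_end|] => /=.
  exact: e0.
move: Jz; rewrite -eq => /(Jpr _ _ Hm oE_end) [//|/JT [_ /=] /eqP].
by rewrite oner_eq0.
Qed.
End S.

Theorem mainTheorem13 (R : comNzRingType) (R_nonzero : (1 : R) != 0) :
  [/\ (* (1) *)
      (forall (w : W1 R) (m : Endo R),
          W1coef_sum w = 1 -> is_end m -> m.1 (W1one R) = w -> m.2 1 = 0 ->
          right_unit (@Te R) m),
      many_right_units (@Te R),
      (* (2) *)
      (forall I : eset R, is_minimal_prime_ideal I -> ~ eset_eq I (@Te R) ->
          le1_right_unit I)
    & (* consequence: T_e is the unique minimal prime ideal with more than
         one right unit *)
      is_minimal_prime_ideal (@Te R) /\ many_right_units (@Te R) /\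
      (forall I : eset R, is_minimal_prime_ideal I -> many_right_units I ->
          eset_eq I (@Te R))].
Proof.
split.
- exact: P1.
- exact: many_Te.
- by move=> I [HI _]; apply: P2.
- split; first exact: Te_min.
  split; first exact: many_Te.
  move=> I [HI _] [u1 [u2 [r1 r2 ne]]].
  apply: NNPP => neq; apply: ne; exact: (@P2 R I HI neq u1 u2 r1 r2).
Qed.
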